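(* Let $S\subset\mathbb{R}^n_+$ be compact and convex with $0\in S$. Then for every $z\in\mathbb{C}^{*n}$ and $w\in\mathbb{C}^n$, $$H_S(z+w)\le H_S(z)+\varphi_S\big(|w_1|/|z_1|,\dots,|w_n|/|z_n|\big),$$ and in particular, for every $w\in\overline{\mathbb{D}}^n$ and $\delta\in\,]0,1[$, $H_S(\mathbf{1}+\delta w)\le\delta\sigma_S$. Furthermore, for every $z\in\mathbb{C}^{*n}$ and $w\in\mathbb{C}^n$, $$H_S(z+w)\le H_S(z)+\varphi_S\big(\log^+(|w_1|/|z_1|),\dots,\log^+(|w_n|/|z_n|)\big)+(\log2)\,\sigma_S.$$
   Context: $\mathbb{R}_+=[0,\infty)$, $\mathbb{C}^*=\mathbb{C}\setminus\{0\}$, $\mathbb{C}^{*n}=(\mathbb{C}^* )^n$, $\mathbb{D}$ is the open unit disc in $\mathbb{C}$, $\mathbf{1}=(1,\dots,1)$. For compact $S\subset\mathbb{R}^n_+$, $\varphi_S(\xi)=\max_{s\in S}\langle s,\xi\rangle$ for $\xi\in\mathbb{R}^n$ (supporting function), and $\sigma_S=\varphi_S(\mathbf{1})$. The logarithmic supporting function $H_S\colon\mathbb{C}^n\to\mathbb{R}_+$ is $H_S(z)=\varphi_S(\log|z_1|,\dots,\log|z_n|)$ for $z\in\mathbb{C}^{*n}$, and $H_S(z)=\limsup_{\mathbb{C}^{*n}\ni w\to z}H_S(w)$ for $z\in\mathbb{C}^n\setminus\mathbb{C}^{*n}$. *)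

(* Defs.v *)
From HB Require Import structures.
From mathcomp Require Import all_boot all_order all_algebra.
From mathcomp Require Import all_classical all_reals all_analysis.
From mathcomp Require Import complex.
Set Implicit Arguments. Unset Strict Implicit. Unset Printing Implicit Defensive.
Import Order.TTheory GRing.Theory Num.Theory.
Import numFieldNormedType.Exports.
Local Open Scope classical_set_scope.
Local Open Scope ring_scope.

Section Defs.
Variables (R : realType) (n : nat).

(* supporting function phi_S(xi) = max_{s in S} <s, xi>  (a max for compact nonempty S) *)
Definition suppf (S : set 'rV[R]_n) (xi : 'rV[R]_n) : R :=
  sup [set \sum_(i < n) s 0 i * xi 0 i | s in S].

Definition sigmaS (S : set 'rV[R]_n) : R := suppf S (const_mx 1).

Definition cabs (z : R[i]) : R := Normc.normc z.

Definition allnz (z : 'rV[R[i]]_n) : Prop := forall i, z 0 i != 0.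

Definition logabs (z : 'rV[R[i]]_n) : 'rV[R]_n := \row_i ln (cabs (z 0 i)).

(* logarithmic supporting function, with values in the extended reals;
   on C^{*n} : phi_S(log|z|); elsewhere the limsup over w -> z, w in C^{*n}. *)
Definition HS (S : set 'rV[R]_n) (z : 'rV[R[i]]_n) : \bar R :=
  if `[< allnz z >] then (suppf S (logabs z))%:E
  else ereal_inf [set ereal_sup [set (suppf S (logabs w))%:E
                                 | w in [set w | allnz w /\
                                          forall i, cabs (w 0 i - z 0 i) < e]]
                 | e in [set e : R | 0 < e]].

Definition convex_rV (S : set 'rV[R]_n) : Prop :=
  forall x y t, S x -> S y -> 0 <= t <= 1 -> S (t *: x + (1 - t) *: y).

(* log^+ t = max(log t, 0) (and log^+ 0 = 0) *)
Definition logplus (t : R) : R := Num.max 0 (ln t).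

End Defs.

(* Main.v *)
Require Import Defs.
From HB Require Import structures.
From mathcomp Require Import all_boot all_order all_algebra.
From mathcomp Require Import all_classical all_reals all_analysis.
From mathcomp Require Import complex.
Import Order.TTheory GRing.Theory Num.Theory.
Import numFieldNormedType.Exports.
Local Open Scope classical_set_scope.
Local Open Scope ring_scope.
Set Implicit Arguments. Unset Strict Implicit.
Lemma entry_le_norm (R : realType) n (s : 'rV[R]_n) i : `|s 0 i| <= `|s|.
Proof.
rewrite [X in _ <= X]mx_normrE.
by apply: (le_bigmax 0 (fun ij : 'I_1 * 'I_n => `|s ij.1 ij.2|) (0, i)).
Qed.

Lemma Sbound (R : realType) n (S : set 'rV[R]_n) : compact S ->
  exists M : R, 0 <= M /\ forall s, S s -> forall i, `|s 0 i| <= M.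
Proof.
move=> /compact_bounded [M [Mr HM]].
exists (Num.max 0 M + 1); split; first by rewrite addr_ge0 // le_max lexx.
move=> s Ss i; apply: (le_trans (@entry_le_norm R n s i)).
have := HM (Num.max 0 M + 1); rewrite /globally/=.
move=> H; apply: H => //.
by rewrite (le_lt_trans (_ : M <= Num.max 0 M)) ?ltrDl // le_max lexx orbT.
Qed.

Definition sset (R : realType) n (S : set 'rV[R]_n) (xi : 'rV[R]_n) : set R :=
  [set \sum_(i < n) s 0 i * xi 0 i | s in S].

Lemma sset_ub (R : realType) n (S : set 'rV[R]_n) (xi : 'rV[R]_n) : compact S ->
  has_ubound (sset S xi).
Proof.
move=> /Sbound [M [M0 HM]].
exists (\sum_(i < n) M * `|xi 0 i|) => _ [s Ss <-].
apply: ler_sum => i _.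
apply: (le_trans (ler_norm _)); rewrite normrM.
by apply: ler_wpM2r => //; apply: HM.
Qed.

Lemma sset_n0 (R : realType) n (S : set 'rV[R]_n) (xi : 'rV[R]_n) : S 0 -> sset S xi !=set0.
Proof. by move=> S0; exists (\sum_(i < n) (0 : 'rV[R]_n) 0 i * xi 0 i); exists 0. Qed.

Lemma le_suppf (R : realType) n (S : set 'rV[R]_n) (xi s : 'rV[R]_n) : compact S -> S s ->
  \sum_(i < n) s 0 i * xi 0 i <= suppf S xi.
Proof. by move=> cS Ss; apply: (ub_le_sup (sset_ub xi cS)); exists s. Qed.

Lemma suppf_le (R : realType) n (S : set 'rV[R]_n) (xi : 'rV[R]_n) (c : R) : S 0 ->
  (forall s, S s -> \sum_(i < n) s 0 i * xi 0 i <= c) -> suppf S xi <= c.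
Proof.
move=> S0 H; apply: ge_sup; first exact: sset_n0.
by move=> _ [s Ss <-]; apply: H.
Qed.

Lemma suppf_ge0 (R : realType) n (S : set 'rV[R]_n) (xi : 'rV[R]_n) : compact S -> S 0 ->
  0 <= suppf S xi.
Proof.
move=> cS S0; apply: le_trans (le_suppf xi cS S0).
by rewrite big1 // => i _; rewrite mxE mul0r.
Qed.

Lemma suppf_comb (R : realType) n (S : set 'rV[R]_n) (xi a b : 'rV[R]_n) (c : R) :
  compact S -> S 0 -> (forall s, S s -> forall i, 0 <= s 0 i) -> 0 <= c ->
  (forall i, xi 0 i <= a 0 i + c * b 0 i) ->
  suppf S xi <= suppf S a + c * suppf S b.
Proof.
move=> cS S0 Sp c0 H; apply: suppf_le => // s Ss.
apply: le_trans (_ : \sum_(i < n) s 0 i * a 0 i + c * \sum_(i < n) s 0 i * b 0 i <= _).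
  rewrite mulr_sumr -big_split /=; apply: ler_sum => i _.
  rewrite mulrCA -mulrDr; apply: ler_wpM2l; [exact: Sp | exact: H].
by apply: lerD; [exact: le_suppf | apply: ler_wpM2l => //; exact: le_suppf].
Qed.

Lemma suppf0_le (R : realType) n (S : set 'rV[R]_n) : S 0 -> suppf S 0 <= 0.
Proof.
move=> S0; apply: suppf_le => // s _.
by rewrite big1 // => i _; rewrite mxE mulr0.
Qed.

Lemma cabs_ge0 (R : realType) (x : R[i]) : 0 <= cabs x.
Proof. by case: x => a b; rewrite /cabs /Normc.normc sqrtr_ge0. Qed.

Lemma cabs_gt0 (R : realType) (x : R[i]) : x != 0 -> 0 < cabs x.
Proof.
move=> x0; rewrite lt_neqAle cabs_ge0 andbT eq_sym; apply/negP => /eqP.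
by move/Normc.eq0_normc; apply/eqP.
Qed.

Lemma cabsD (R : realType) (x y : R[i]) : cabs (x + y) <= cabs x + cabs y.
Proof. exact: (@le_normcD R x y). Qed.

Lemma ln_le_aux (R : realType) (a c e y : R) : 0 < c -> c <= a -> 0 < y ->
  y <= a + e -> 0 <= e -> ln y <= ln a + e / c.
Proof.
move=> c0 ca y0 ye e0.
have a0 : 0 < a by apply: lt_le_trans ca.
have ae0 : 0 < a + e by apply: ltr_wpDr.
apply: (le_trans (_ : ln y <= ln (a + e))).
  by rewrite ler_ln // ?posrE.
have -> : a + e = a * (1 + e / a) by rewrite mulrDr mulr1 mulrCA divff ?gt_eqF // mulr1.
have t0 : 0 <= e / a by rewrite divr_ge0 // ltW.
rewrite lnM ?posrE //; last by rewrite ltr_wpDr.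
apply: lerD => //; apply: (le_trans (le_ln1Dx _)).
  by apply: (lt_le_trans _ t0); rewrite oppr_lt0.
by apply: ler_wpM2l => //; rewrite lef_pV2 ?posrE.
Qed.

Lemma ln_le_aux2 (R : realType) (a b : R) : 0 < a -> 0 <= b ->
  ln (a + b) <= ln a + logplus (b / a) + ln 2.
Proof.
move=> a0 b0.
have t0 : 0 <= b / a by rewrite divr_ge0 // ltW.
have -> : a + b = a * (1 + b / a) by rewrite mulrDr mulr1 mulrCA divff ?gt_eqF // mulr1.
rewrite lnM ?posrE //; last by rewrite ltr_wpDr.
rewrite -addrA lerD2l /logplus.
have l20 : 0 <= ln (2 : R) by rewrite ln_ge0 // ler1n.
case: (leP (b / a) 1) => t1.
  apply: (le_trans (_ : _ <= ln 2)); last by rewrite lerDr le_max lexx.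
  rewrite ler_ln ?posrE ?ltr0n ?ltr_wpDr //.
  by rewrite -[2]/(1 + 1)%:R natrD lerD2l.
have tp : 0 < b / a by apply: lt_trans t1.
apply: (le_trans (_ : _ <= ln (b / a) + ln 2)); last first.
  by rewrite lerD2r le_max lexx orbT.
have t2 : 0 < 2 * (b / a) by rewrite mulr_gt0 ?ltr0n.
rewrite -lnM ?posrE ?ltr0n // ler_ln ?posrE ?ltr_wpDr //.
rewrite mulrDr mulr1 lerD2r ltW //. rewrite [_ * 2]mulrC //.
Qed.

Lemma core (R : realType) n (S : set 'rV[R]_n) (z u : 'rV[R[i]]_n) :
  compact S -> S 0 -> (forall s, S s -> forall i, 0 <= s 0 i) -> allnz z ->
  (HS S (z + u) <= (suppf S (\row_i ln (cabs (z 0 i) + cabs (u 0 i))))%:E)%E.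
Proof.
move=> cS S0 Sp zn.
set x := \row_i _.
have zp : forall i, 0 < cabs (z 0 i) by move=> i; apply: cabs_gt0.
have key : forall (v : 'rV[R[i]]_n) (e : R), allnz v -> 0 <= e ->
    (forall i, cabs (v 0 i - (z + u) 0 i) <= e) ->
    suppf S (logabs v) <= suppf S x + e * suppf S (\row_i (cabs (z 0 i))^-1).
  move=> v e vn e0 ve; apply: suppf_comb => // i.
  rewrite !mxE.
  apply: (@ln_le_aux R _ (cabs (z 0 i))) => //.
  - by rewrite lerDl cabs_ge0.
  - exact: cabs_gt0.
  - have -> : v 0 i = (v 0 i - (z + u) 0 i) + (z + u) 0 i by rewrite subrK.
    apply: (le_trans (cabsD _ _)); rewrite addrC; apply: lerD; last exact: ve.
    by rewrite mxE; apply: cabsD.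
rewrite /HS; case: (pselect (allnz (z + u))) => zun.
  rewrite asboolT // lee_fin.
  apply: (le_trans (key _ 0 zun (lexx 0) _)).
    by move=> i; rewrite subrr /cabs Normc.normc0.
  by rewrite mul0r addr0.
rewrite asboolF //.
set K := suppf S (\row_i (cabs (z 0 i))^-1).
have K0 : 0 <= K by apply: suppf_ge0.
apply/lee_addgt0Pr => eps eps0.
have K1 : 0 < K + 1 by rewrite ltr_wpDl.
set e := eps / (K + 1).
have e0 : 0 < e by rewrite divr_gt0.
apply: ge_ereal_inf; eexists; first by exists e.
apply: ge_ereal_sup => _ [v [vn ve] <-].
rewrite -EFinD lee_fin.
apply: (le_trans (key v e vn (ltW e0) (fun i => ltW (ve i)))).
rewrite lerD2l /e mulrAC ler_pdivrMr // ler_pM2l // lerDl //.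
Qed.

Unset Implicit Arguments.

Theorem proposition3p2 (R : realType) (n : nat) (S : set 'rV[R]_n) :
  compact S -> convex_rV S -> (forall s, S s -> forall i, 0 <= s 0 i) -> S 0 ->
  [/\ (forall z w : 'rV[R[i]]_n, allnz z ->
         (HS S (z + w)%R <= HS S z
            + (suppf S (\row_i (cabs (w 0 i) / cabs (z 0 i)))%R)%:E)%E),
      (forall (w : 'rV[R[i]]_n) (d : R), (forall i, cabs (w 0 i) <= 1) ->
         0 < d < 1 ->
         (HS S ((const_mx 1 : 'rV[R[i]]_n) + (d%:C)%C *: w)%R <= (d * sigmaS S)%R%:E)%E)
    & (forall z w : 'rV[R[i]]_n, allnz z ->
         (HS S (z + w)%R <= HS S z
            + (suppf S (\row_i logplus (cabs (w 0 i) / cabs (z 0 i)))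
               + ln 2 * sigmaS S)%R%:E)%E)].
Proof.
move=> cS _ Sp S0; split.
- move=> z w zn; apply: (le_trans (core w cS S0 Sp zn)).
  rewrite /HS asboolT // -EFinD lee_fin.
  rewrite -[X in _ + X]mul1r; apply: suppf_comb => // i.
  rewrite !mxE mul1r.
  have zp := cabs_gt0 (zn i).
  have := @ln_le_aux R (cabs (z 0 i)) (cabs (z 0 i)) (cabs (w 0 i)) _ zp (lexx _).
  apply => //; [by rewrite (lt_le_trans zp) // lerDl cabs_ge0 | exact: cabs_ge0].
- move=> w d w1 /andP[d0 d1].
  have on : allnz (const_mx 1 : 'rV[R[i]]_n) by move=> i; rewrite mxE oner_neq0.
  apply: (le_trans (core _ cS S0 Sp on)); rewrite lee_fin.
  apply: (le_trans (_ : _ <= suppf S 0 + d * sigmaS S)).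
    apply: suppf_comb => // [|i]; first exact: ltW.
    rewrite !mxE add0r mulr1 /cabs Normc.normc1 Normc.normcM.
    have -> : Normc.normc (d%:C)%C = d.
      by rewrite /Normc.normc /= expr0n /= addr0 sqrtr_sqr gtr0_norm.
    apply: (le_trans (le_ln1Dx _)).
      by apply: (lt_le_trans _ (mulr_ge0 (ltW d0) (cabs_ge0 (w 0 i)))); rewrite oppr_lt0.
    by rewrite -[X in _ <= X]mulr1; apply: ler_wpM2l; [exact: ltW | exact: w1].
  by rewrite -[X in _ <= X]add0r lerD2r suppf0_le.
- move=> z w zn; apply: (le_trans (core w cS S0 Sp zn)).
  rewrite /HS asboolT // -EFinD lee_fin.
  have l20 : 0 <= ln (2 : R) by rewrite ln_ge0 // ler1n.
  apply: (le_trans (_ : _ <= suppf S (logabs z) + 1 * suppf S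
      (\row_i (logplus (cabs (w 0 i) / cabs (z 0 i)) + ln 2)))).
    apply: suppf_comb => // i.
    rewrite !mxE mul1r addrA; apply: ln_le_aux2; [exact: cabs_gt0 | exact: cabs_ge0].
  rewrite mul1r lerD2l; apply: suppf_comb => // i.
  by rewrite !mxE mulr1.
Qed.
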